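(* Let $\sigma_0,\sigma_\epsilon>0$ with $\sigma_0\neq\sigma_\epsilon$, $\theta_0\in\mathbb{R}$, prior $\Theta\sim\mathrm{Laplace}(\theta_0,\sigma_0)$, signal $X=\Theta+\epsilon$ with $\epsilon\sim\mathrm{Laplace}(0,\sigma_\epsilon)$ independent of $\Theta$, and let $\theta_1(x)=\mathbb{E}[\Theta\mid X=x]$. Put $x_0=x-\theta_0$ and $x^*=\frac{2/\sigma_0}{1/\sigma_\epsilon^2-1/\sigma_0^2}$. Then as $|x_0|\to\infty$: (i) if $\sigma_0>\sigma_\epsilon$, $\theta_1(x)-\bigl(x-\operatorname{sgn}(x_0)x^*\bigr)\to0$, i.e. $\theta_1-\theta_0\approx x_0-\operatorname{sgn}(x_0)x^*$; (ii) if $\sigma_0<\sigma_\epsilon$, $\theta_1(x)-\theta_0\to-\operatorname{sgn}(x_0)\frac{\sigma_0}{\sigma_\epsilon}x^*$ (a bounded shift).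
   Context: $\mathrm{Laplace}(\mu,s)$ has density $t\mapsto\frac{1}{2s}e^{-|t-\mu|/s}$. The posterior mean is $\theta_1(x)=\frac{\int\theta f_\Theta(\theta)l_\epsilon(x-\theta)d\theta}{\int f_\Theta(\theta)l_\epsilon(x-\theta)d\theta}$. *)

(* Defs.v *)
From HB Require Import structures.
From mathcomp Require Import all_boot all_order all_algebra.
From mathcomp Require Import all_classical all_reals all_analysis.
Set Implicit Arguments. Unset Strict Implicit. Unset Printing Implicit Defensive.
Import Order.TTheory GRing.Theory Num.Theory.
Import numFieldNormedType.Exports.
Local Open Scope classical_set_scope.
Local Open Scope ring_scope.

Definition laplace_pdf (R : realType) (mu s : R) (t : R) : R :=
  (2 * s)^-1 * expR (- (`|t - mu| / s)).

Definition posterior_mean (R : realType) (th0 s0 se : R) (x : R) : R :=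
  Rintegral (@lebesgue_measure R) setT
    (fun th => th * laplace_pdf th0 s0 th * laplace_pdf 0 se (x - th))
  / Rintegral (@lebesgue_measure R) setT
    (fun th => laplace_pdf th0 s0 th * laplace_pdf 0 se (x - th)).

Definition xstar (R : realType) (s0 se : R) : R :=
  (2 / s0) / (se ^- 2 - s0 ^- 2).

(* Main.v *)
Require Import Defs.
From HB Require Import structures.
From mathcomp Require Import all_boot all_order all_algebra.
From mathcomp Require Import all_classical all_reals all_analysis.
From mathcomp Require Import ring lra.
Import Order.TTheory GRing.Theory Num.Theory.
Import numFieldNormedType.Exports.
Local Open Scope classical_set_scope.
Local Open Scope ring_scope.

Section S.
Context {R : realType}.
Lemma is_derive_aff (g c p x : R) : is_derive x 1 (fun t : R => g + c * (t - p)) c.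
Proof.
have H1 : is_derive x 1 (fun t : R => t - p) 1.
  have := @is_deriveB _ _ _ id (cst p) x 1 1 0 _ _.
  by rewrite subr0; apply.
have H2 := @is_deriveZ _ _ _ (fun t : R => t - p) c x 1 1 H1.
have := @is_deriveD _ _ _ (cst g) (c *: (fun t : R => t - p)) x 1 0 (c *: 1) _ H2.
rewrite add0r /GRing.scale /= mulr1; apply.
Qed.
Lemma is_derive_E (g c p x : R) :
  is_derive x 1 (fun t : R => expR (g + c * (t - p))) (c * expR (g + c * (x - p))).
Proof.
have Ha := is_derive_aff g c p x.
apply: DeriveDef.
  apply/derivable1_diffP.
  apply: (@differentiable_comp _ _ _ _ (fun t : R => g + c * (t - p)) expR).
    exact/derivable1_diffP/ex_derive.
  exact/derivable1_diffP/ex_derive.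
rewrite -derive1E (@derive1_comp _ (fun t : R => g + c * (t - p)) expR).
- by rewrite !derive1E !derive_val mulrC.
- exact: ex_derive.
- exact: ex_derive.
Qed.

Definition pf (al be g s p t : R) := (al + be * (t - p)) * expR (g + s * (t - p)).
Definition Fp (al be g s p t : R) :=
  expR (g + s * (t - p)) * ((al - be / s) / s + be / s * (t - p)).

Lemma is_derive_prod (g s p A B x : R) :
  is_derive x 1 (fun t => expR (g + s * (t - p)) * (A + B * (t - p)))
    (expR (g + s * (x - p)) * B + (A + B * (x - p)) * (s * expR (g + s * (x - p)))).
Proof.
have H1 := is_derive_E g s p x.
have H2 := is_derive_aff A B p x.
have := @is_deriveM _ _ (fun t => expR (g + s * (t - p))) (fun t => A + B * (t - p)) x 1 _ _ H1 H2.
by rewrite /GRing.scale /=; apply.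
Qed.

Lemma is_derive_Fp (al be g s p x : R) : s != 0 ->
  is_derive x 1 (Fp al be g s p) (pf al be g s p x).
Proof.
move=> s0; rewrite /Fp.
have H := is_derive_prod g s p ((al - be / s) / s) (be / s) x.
apply: (is_derive_eq H).
rewrite /pf; field.
exact: s0.
Qed.

Lemma is_derive_pf (al be g s p x : R) :
  derivable (pf al be g s p) x 1.
Proof.
have H := is_derive_prod g s p al be x.
rewrite /pf.
have -> : (fun t => (al + be * (t - p)) * expR (g + s * (t - p))) =
   (fun t => expR (g + s * (t - p)) * (al + be * (t - p))).
  by apply/funext => t; rewrite mulrC.
exact: ex_derive.
Qed.

Lemma derivable_cont (f : R -> R) x : derivable f x 1 -> {for x, continuous f}.
Proof. by move=> /derivable1_diffP /differentiable_continuous. Qed.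

Lemma cont_pf al be g s p : continuous (pf al be g s p).
Proof. by move=> x; apply: derivable_cont; exact: is_derive_pf. Qed.

Lemma cont_Fp al be g s p : s != 0 -> continuous (Fp al be g s p).
Proof. by move=> s0 x; apply: derivable_cont; apply: ex_derive; exact: is_derive_Fp. Qed.

Lemma decay1 (s p : R) : s < 0 ->
  (fun t => (t - p) * expR (s * (t - p))) @ +oo --> 0.
Proof.
move=> s0.
apply/cvgrPdist_lt => e e0.
near=> t.
have yp : 0 < t - p.
  rewrite subr_gt0; near: t; apply: nbhs_pinfty_gt; exact: num_real.
have ye : 2 / (s ^+ 2 * e) < t - p.
  rewrite ltrBrDl; near: t; apply: nbhs_pinfty_gt; exact: num_real.
set y := t - p in yp ye *.
have hsy : 0 < - s * y by nra.
have Fy := @expR_ge1Dxn R (- s * y) 1 (ltW hsy).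
rewrite sub0r normrN ger0_norm; last by rewrite mulr_ge0 // ?ltW // expR_ge0.
have hE : expR (s * y) * expR (- s * y) = 1.
  by rewrite -expRD mulNr addrN expR0.
have s2 : 0 < s ^+ 2 by rewrite expr2; nra.
have H2 : 2 < y * (s ^+ 2 * e).
  by rewrite -ltr_pdivrMr // mulr_gt0.
rewrite /= in Fy.
have ep := expR_gt0 (s * y).
have ep2 := expR_gt0 (- s * y).
move: Fy; rewrite (_ : (2`!)%:R = 2 :> R) // => Fy.
rewrite expr2 in s2 H2 Fy.
nra.
Unshelve. all: end_near.
Qed.

Lemma decay0 (s p : R) : s < 0 ->
  (fun t => expR (s * (t - p))) @ +oo --> 0.
Proof.
move=> s0.
apply/cvgrPdist_lt => e e0.
near=> t.
have yp : 0 < t - p.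
  rewrite subr_gt0; near: t; apply: nbhs_pinfty_gt; exact: num_real.
have ye : 1 / (- s * e) < t - p.
  rewrite ltrBrDl; near: t; apply: nbhs_pinfty_gt; exact: num_real.
set y := t - p in yp ye *.
have hsy : 0 < - s * y by nra.
have Fy := @expR_ge1Dx R (- s * y).
rewrite sub0r normrN ger0_norm; last exact: expR_ge0.
have hE : expR (s * y) * expR (- s * y) = 1.
  by rewrite -expRD mulNr addrN expR0.
have H2 : 1 < y * (- s * e).
  by rewrite -ltr_pdivrMr // mulr_gt0 // oppr_gt0.
have ep := expR_gt0 (s * y).
have ep2 := expR_gt0 (- s * y).
nra.
Unshelve. all: end_near.
Qed.

Notation mu := (@lebesgue_measure R).

Lemma Fp_cvg al be g s p : s < 0 -> Fp al be g s p x @[x --> +oo] --> 0.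
Proof.
move=> s0.
have -> : Fp al be g s p = fun t => expR g * (((al - be / s) / s) * expR (s * (t - p))
      + (be / s) * ((t - p) * expR (s * (t - p)))).
  by apply/funext => t; rewrite /Fp expRD; ring.
have H : (fun t => expR g * (((al - be / s) / s) * expR (s * (t - p))
      + (be / s) * ((t - p) * expR (s * (t - p))))) @ +oo -->
      expR g * (((al - be / s) / s) * 0 + (be / s) * 0).
  apply: cvgMl_tmp; apply: cvgD; apply: cvgMl_tmp.
    exact: decay0.
  exact: decay1.
by rewrite !mulr0 addr0 mulr0 in H.
Qed.

Lemma right_ge0 al be g s p : s < 0 -> 0 <= al -> 0 <= be ->
  (\int[mu]_(t in `[p, +oo[) (pf al be g s p t)%:E = (- Fp al be g s p p)%:E)%E.
Proof.
move=> s0 al0 be0.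
have sn0 : s != 0 by rewrite lt_eqF.
rewrite (@ge0_continuous_FTC2y R (pf al be g s p) (Fp al be g s p) p 0).
- by rewrite sub0e EFinN.
- move=> x px; rewrite /pf mulr_ge0 ?expR_ge0 // addr_ge0 // mulr_ge0 //.
  by rewrite subr_ge0.
- exact/continuous_subspaceT/cont_pf.
- exact: Fp_cvg.
- by move=> x _; apply: ex_derive; exact: is_derive_Fp.
- by apply: cvg_at_right_filter; exact: cont_Fp.
- by move=> x _; have H := is_derive_Fp al be g s p x sn0; rewrite derive1E derive_val.
Qed.


Lemma lin_int (D : set (measurableTypeR R)) (f1 f2 : R -> R) a b : measurable D ->
  mu.-integrable D (EFin \o f1) -> mu.-integrable D (EFin \o f2) ->
  mu.-integrable D (EFin \o (fun t => a * f1 t + b * f2 t)) /\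
  \int[mu]_(t in D) (a * f1 t + b * f2 t) =
    a * \int[mu]_(t in D) f1 t + b * \int[mu]_(t in D) f2 t.
Proof.
move=> mD i1 i2.
have j1 : mu.-integrable D (EFin \o (fun t => a * f1 t)).
  by apply: (eq_integrable mD _ _ _ (integrableZl mD a i1)) => // t _ /=; rewrite EFinM.
have j2 : mu.-integrable D (EFin \o (fun t => b * f2 t)).
  by apply: (eq_integrable mD _ _ _ (integrableZl mD b i2)) => // t _ /=; rewrite EFinM.
split; first by apply: (eq_integrable mD _ _ _ (integrableD mD j1 j2)) => // t _ /=; rewrite EFinD.
by rewrite RintegralD // RintegralZl // RintegralZl.
Qed.

Lemma ge0_int (D : set (measurableTypeR R)) (f : R -> R) v : measurable D -> continuous f ->
  (forall t, D t -> 0 <= f t) -> (\int[mu]_(t in D) (f t)%:E = v%:E)%E ->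
  mu.-integrable D (EFin \o f) /\ \int[mu]_(t in D) f t = v.
Proof.
move=> mD cf f0 H; split; last by rewrite /Rintegral H.
apply/integrableP; split.
  by apply/measurable_realfun.measurable_EFinP; apply: measurable_funTS; exact: measurable_realfun.continuous_measurable_fun.
have -> : (\int[mu]_(x in D) `|(EFin \o f) x| = \int[mu]_(x in D) (f x)%:E)%E.
  by apply: eq_integral => t; rewrite inE => Dt /=; rewrite ger0_norm // f0.
by rewrite H ltry.
Qed.

Lemma pf_lin al be g s p : pf al be g s p =
  (fun t => al * pf 1 0 g s p t + be * pf 0 1 g s p t).
Proof. by apply/funext => t; rewrite /pf; ring. Qed.

Lemma right_piece al be g k p : 0 < k ->
  mu.-integrable `[p, +oo[ (EFin \o pf al be g (- k) p) /\
  \int[mu]_(t in `[p, +oo[) pf al be g (- k) p t = expR g * (al / k + be / k ^+ 2).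
Proof.
move=> k0.
have kn0 : k != 0 by rewrite gt_eqF.
have base al' be' : 0 <= al' -> 0 <= be' ->
  mu.-integrable `[p, +oo[ (EFin \o pf al' be' g (- k) p) /\
  \int[mu]_(t in `[p, +oo[) pf al' be' g (- k) p t = expR g * (al' / k + be' / k ^+ 2).
  move=> a0 b0; apply: ge0_int => //.
  - exact: cont_pf.
  - move=> x /=; rewrite in_itv /= andbT => px.
    by rewrite /pf mulr_ge0 ?expR_ge0 // addr_ge0 // mulr_ge0 // subr_ge0.
  - rewrite right_ge0 ?oppr_lt0 //; congr EFin.
    rewrite /Fp subrr mulr0 addr0 mulr0; field; exact: kn0.
have [i1 v1] := base 1 0 ler01 (lexx 0).
have [i2 v2] := base 0 1 (lexx 0) ler01.
have [i3 v3] := lin_int _ _ _ al be (measurable_itv _) i1 i2.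
rewrite pf_lin; split => //.
rewrite v3 v1 v2; field; exact: kn0.
Qed.

Definition pfL (al be g k q t : R) := (al + be * (q - t)) * expR (g - k * (q - t)).

Lemma pfL_pf al be g k q : pfL al be g k q = pf al (- be) g k q.
Proof. by apply/funext => t; rewrite /pfL /pf; congr (_ * expR _); ring. Qed.

Lemma left_ge0 al be g k q : 0 < k -> 0 <= al -> 0 <= be ->
  (\int[mu]_(t in `]-oo, q]) (pfL al be g k q t)%:E =
   (expR g * (al / k + be / k ^+ 2))%:E)%E.
Proof.
move=> k0 a0 b0.
have kn0 : k != 0 by rewrite gt_eqF.
have H := @ge0_integration_by_substitutionNy R (pfL al be g k q) (- q).
rewrite opprK in H.
rewrite H; last 2 first.
- by apply: continuous_subspaceT; rewrite pfL_pf; exact: cont_pf.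
- move=> x; rewrite in_itv /= => xq.
  rewrite /pfL mulr_ge0 ?expR_ge0 // addr_ge0 // mulr_ge0 // subr_ge0 ltW //.
have -> : (\int[mu]_(x in `[(- q)%R, +oo[) ((pfL al be g k q \o -%R) x)%:E =
    \int[mu]_(x in `[(- q)%R, +oo[) (pf al be g (- k) (- q) x)%:E)%E.
  by apply: eq_integral => t _ /=; rewrite /pfL /pf; congr (EFin (_ * expR _)); ring.
rewrite right_ge0 ?oppr_lt0 //; congr EFin.
rewrite /Fp subrr mulr0 addr0 mulr0; field; exact: kn0.
Qed.

Lemma pfL_lin al be g k q : pfL al be g k q =
  (fun t => al * pfL 1 0 g k q t + be * pfL 0 1 g k q t).
Proof. by apply/funext => t; rewrite /pfL; ring. Qed.

Lemma left_piece al be g k q : 0 < k ->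
  mu.-integrable `]-oo, q] (EFin \o pfL al be g k q) /\
  \int[mu]_(t in `]-oo, q]) pfL al be g k q t = expR g * (al / k + be / k ^+ 2).
Proof.
move=> k0.
have kn0 : k != 0 by rewrite gt_eqF.
have base al' be' : 0 <= al' -> 0 <= be' ->
  mu.-integrable `]-oo, q] (EFin \o pfL al' be' g k q) /\
  \int[mu]_(t in `]-oo, q]) pfL al' be' g k q t = expR g * (al' / k + be' / k ^+ 2).
  move=> a0 b0; apply: ge0_int => //.
  - by rewrite pfL_pf; exact: cont_pf.
  - move=> x /=; rewrite in_itv /= => xq.
    by rewrite /pfL mulr_ge0 ?expR_ge0 // addr_ge0 // mulr_ge0 // subr_ge0.
  - exact: left_ge0.
have [i1 v1] := base 1 0 ler01 (lexx 0).
have [i2 v2] := base 0 1 (lexx 0) ler01.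
have [i3 v3] := lin_int _ _ _ al be (measurable_itv _) i1 i2.
rewrite pfL_lin; split => //.
rewrite v3 v1 v2; field; exact: kn0.
Qed.

Lemma mid_piece al be g s p q : s != 0 -> p < q ->
  mu.-integrable `[p, q] (EFin \o pf al be g s p) /\
  \int[mu]_(t in `[p, q]) pf al be g s p t = Fp al be g s p q - Fp al be g s p p.
Proof.
move=> s0 pq.
have cf : {within `[p, q], continuous (pf al be g s p)}.
  exact/continuous_subspaceT/cont_pf.
split.
  apply: continuous_compact_integrable => //; exact: segment_compact.
rewrite /Rintegral (@continuous_FTC2 R _ (Fp al be g s p) _ _ pq cf) //.
- split.
  + by move=> x _; apply: ex_derive; exact: is_derive_Fp.
  + by apply: cvg_at_right_filter; exact: cont_Fp.
  + by apply: cvg_at_left_filter; exact: cont_Fp.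
- by move=> x _; have H := is_derive_Fp al be g s p x s0; rewrite derive1E derive_val.
Qed.


Lemma integrableU2 (A B : set (measurableTypeR R)) (f : R -> R) :
  continuous f ->
  measurable A -> measurable B -> [disjoint A & B] ->
  mu.-integrable A (EFin \o f) -> mu.-integrable B (EFin \o f) ->
  mu.-integrable (A `|` B) (EFin \o f).
Proof.
move=> cf mA mB AB /integrableP[mfA iA] /integrableP[mfB iB].
apply/integrableP; split.
  by apply/measurable_funU.
rewrite ge0_integral_setU //.
- exact: lte_add_pinfty.
- have -> : (fun x => `|(EFin \o f) x|%E) = EFin \o (fun x => `|f x|) by apply/funext.
  apply/measurable_realfun.measurable_EFinP; apply: measurable_funTS.
  apply: measurable_realfun.continuous_measurable_fun.
  move=> x; apply: continuous_comp; first exact: cf.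
  exact: norm_continuous.
Qed.

Lemma three (f : R -> R) m1 m2 : m1 < m2 -> continuous f ->
  mu.-integrable `]-oo, m1] (EFin \o f) -> mu.-integrable `[m2, +oo[ (EFin \o f) ->
  \int[mu]_(t in setT) f t = \int[mu]_(t in `]-oo, m1]) f t +
     \int[mu]_(t in `[m1, m2]) f t + \int[mu]_(t in `[m2, +oo[) f t.
Proof.
move=> m12 cf i1 i3.
have i2 : mu.-integrable `[m1, m2] (EFin \o f).
  apply: continuous_compact_integrable; first exact: segment_compact.
  exact: continuous_subspaceT.
have i2' : mu.-integrable `]m1, m2[ (EFin \o f).
  apply: integrableS i2 => //; exact: subset_itv_oo_cc.
have i2'' : mu.-integrable `[m1, m2[ (EFin \o f).
  apply: integrableS i2 => //; exact: subset_itv_co_cc.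
have d23 : [disjoint `]m1, m2[ & `[m2, +oo[].
  apply/disj_setPS => t [] /=; rewrite !in_itv /= andbT => /andP[_ h1] h2.
  by move: (lt_le_trans h1 h2); rewrite ltxx.
have d1 : [disjoint `]-oo, m1] & `]m1, m2[ `|` `[m2, +oo[].
  apply/disj_setPS => t [] /=; rewrite !in_itv /= => h1 [] /=; rewrite ?in_itv /=.
    by move=> /andP[h2 _]; move: (le_lt_trans h1 h2); rewrite ltxx.
  by rewrite andbT => h2; move: (le_trans h2 h1); rewrite leNgt m12.
have ET : [set: R] = `]-oo, m1] `|` (`]m1, m2[ `|` `[m2, +oo[).
  apply/seteqP; split => t // _ /=; rewrite !in_itv /= andbT.
  case: (leP t m1) => h1; first by left.
  right; case: (ltP t m2) => h2; first by left; apply/andP; split.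
  by right.
have i23 := @integrableU2 _ _ f cf (measurable_itv _) (measurable_itv _) d23 i2' i3.
have i123 := @integrableU2 _ _ f cf (measurable_itv _) (measurableU _ _ (measurable_itv _) (measurable_itv _)) d1 i1 i23.
rewrite ET Rintegral_setU //; last exact: measurableU.
rewrite Rintegral_setU // Rintegral_itv_obnd_cbnd // Rintegral_itv_bndo_bndc //.
by rewrite addrA.
Qed.



Lemma cont_shift_abs (h : R -> R) mu : continuous h -> continuous (fun t => `|h t - mu|).
Proof.
move=> ch t.
apply: (@continuous_comp _ _ _ (fun t => h t - mu) (@Num.norm _ R)).
  apply: continuousB; first exact: ch.
  exact: cst_continuous.
exact: norm_continuous.
Qed.

Lemma cont_lap (h : R -> R) mu s : continuous h -> continuous (fun t => laplace_pdf mu s (h t)).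
Proof.
move=> ch t.
have -> : (fun t => laplace_pdf mu s (h t)) =
   (fun t => pf ((2 * s)^-1) 0 0 (- s^-1) 0 (`|h t - mu|)).
  by apply/funext => y; rewrite /laplace_pdf /pf; congr (_ * expR _); ring.
apply: (@continuous_comp _ _ _ (fun t => `|h t - mu|) (pf ((2 * s)^-1) 0 0 (- s^-1) 0)).
  exact: cont_shift_abs.
exact: cont_pf.
Qed.


Definition Df (a b d : R) := expR (- (b * d)) / (a + b) +
  (expR (- (a * d)) - expR (- (b * d))) / (b - a) + expR (- (a * d)) / (a + b).
Definition Mf (a b d : R) := expR (- (b * d)) * ((b - a)^-2 - (a + b)^-2) +
  expR (- (a * d)) * (d / (b - a) - (b - a)^-2 + d / (a + b) + (a + b)^-2).

Lemma esplit (c1 c2 A1 A2 E al : R) : E = A1 + A2 -> al = c1 * c2 ->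
  c1 * expR A1 * (c2 * expR A2) = al * expR E.
Proof. by move=> -> ->; rewrite expRD; ring. Qed.

Lemma esplit2 (t c1 c2 A1 A2 E al : R) : E = A1 + A2 -> al = t * (c1 * c2) ->
  t * (c1 * expR A1) * (c2 * expR A2) = al * expR E.
Proof. by move=> -> ->; rewrite expRD; ring. Qed.

Lemma int_plus (s0 se th0 x : R) : 0 < s0 -> 0 < se -> s0 != se -> th0 < x ->
  \int[mu]_(t in setT) (laplace_pdf th0 s0 t * laplace_pdf 0 se (x - t)) =
    (2 * s0)^-1 * (2 * se)^-1 * Df s0^-1 se^-1 (x - th0) /\
  \int[mu]_(t in setT) (t * laplace_pdf th0 s0 t * laplace_pdf 0 se (x - t)) =
    (2 * s0)^-1 * (2 * se)^-1 * (th0 * Df s0^-1 se^-1 (x - th0) + Mf s0^-1 se^-1 (x - th0)).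
Proof.
move=> s00 se0 sne thx.
have s0n : s0 != 0 by rewrite gt_eqF.
have sen : se != 0 by rewrite gt_eqF.
set a := s0^-1. set b := se^-1. set d := x - th0. set C := (2 * s0)^-1 * (2 * se)^-1.
have a0 : 0 < a by rewrite invr_gt0.
have b0 : 0 < b by rewrite invr_gt0.
have k0 : 0 < a + b by rewrite addr_gt0.
have kn : a + b != 0 by rewrite gt_eqF.
have cn : b - a != 0.
  rewrite subr_eq0; apply/eqP => /(congr1 (fun z => z^-1)); rewrite !invrK => h.
  by move/eqP: sne; rewrite h.
have cf : continuous (fun t => laplace_pdf th0 s0 t * laplace_pdf 0 se (x - t)).
  move=> t; apply: continuousM.
    by apply: (cont_lap (fun y => y) th0 s0) => y; exact: cvg_id.
  apply: (cont_lap (fun t => x - t) 0 se) => y.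
  apply: continuousB; [exact: cst_continuous | exact: cvg_id].
have cg0 : continuous ((fun t => t) \* (fun t => laplace_pdf th0 s0 t * laplace_pdf 0 se (x - t))).
  by move=> t; apply: continuousM; [exact: cvg_id | exact: cf].
have eL : {in `]-oo, th0], forall t, laplace_pdf th0 s0 t * laplace_pdf 0 se (x - t) = pfL C 0 (- (b * d)) (a + b) th0 t}.
  move=> t; rewrite in_itv /= => ht.
  rewrite /laplace_pdf /pfL ler0_norm ?subr_le0 // subr0 ger0_norm ?subr_ge0 ?(le_trans ht) ?ltW //.
  rewrite mul0r addr0; apply: esplit => //.
  by rewrite /d /a /b; ring.
have eM : {in `[th0, x], forall t, laplace_pdf th0 s0 t * laplace_pdf 0 se (x - t) = pf C 0 (- (b * d)) (b - a) th0 t}.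
  move=> t; rewrite in_itv /= => /andP[h1 h2].
  rewrite /laplace_pdf /pf ger0_norm ?subr_ge0 // subr0 ger0_norm ?subr_ge0 //.
  rewrite mul0r addr0; apply: esplit => //.
  by rewrite /d /a /b; ring.
have eR : {in `[x, +oo[, forall t, laplace_pdf th0 s0 t * laplace_pdf 0 se (x - t) = pf C 0 (- (a * d)) (- (a + b)) x t}.
  move=> t; rewrite in_itv /= andbT => ht.
  rewrite /laplace_pdf /pf ger0_norm ?subr_ge0 ?(le_trans (ltW thx)) // subr0 ler0_norm ?subr_le0 //.
  rewrite mul0r addr0; apply: esplit => //.
  by rewrite /d /a /b; ring.
have nL : {in `]-oo, th0], forall t, t * (laplace_pdf th0 s0 t * laplace_pdf 0 se (x - t)) = pfL (C * th0) (- C) (- (b * d)) (a + b) th0 t}.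
  move=> t ht; rewrite eL // /pfL; ring.
have nM : {in `[th0, x], forall t, t * (laplace_pdf th0 s0 t * laplace_pdf 0 se (x - t)) = pf (C * th0) C (- (b * d)) (b - a) th0 t}.
  move=> t ht; rewrite eM // /pf; ring.
have nR : {in `[x, +oo[, forall t, t * (laplace_pdf th0 s0 t * laplace_pdf 0 se (x - t)) = pf (C * x) C (- (a * d)) (- (a + b)) x t}.
  move=> t ht; rewrite eR // /pf; ring.
have [iL vL] := left_piece C 0 (- (b * d)) (a + b) th0 k0.
have [iR vR] := right_piece C 0 (- (a * d)) (a + b) x k0.
have [iL' vL'] := left_piece (C * th0) (- C) (- (b * d)) (a + b) th0 k0.
have [iR' vR'] := right_piece (C * x) C (- (a * d)) (a + b) x k0.
have [_ vM] := mid_piece C 0 (- (b * d)) (b - a) th0 x cn thx.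
have [_ vM'] := mid_piece (C * th0) C (- (b * d)) (b - a) th0 x cn thx.
have ed : - (b * d) + (b - a) * (x - th0) = - (a * d) by rewrite /d; ring.
split.
  rewrite (three _ _ _ thx cf).
  - rewrite (eq_Rintegral mu (D := `]-oo, th0]) (g := pfL C 0 (- (b * d)) (a + b) th0)); last first.
      by move=> t ht; exact: (eL t (set_mem ht)).
    rewrite (eq_Rintegral mu (D := `[th0, x]) (g := pf C 0 (- (b * d)) (b - a) th0)); last first.
      by move=> t ht; exact: (eM t (set_mem ht)).
    rewrite (eq_Rintegral mu (D := `[x, +oo[) (g := pf C 0 (- (a * d)) (- (a + b)) x)); last first.
      by move=> t ht; exact: (eR t (set_mem ht)).
    rewrite vL vR vM.
    rewrite /Fp ed subrr mulr0 addr0 /Df; field.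
    by apply/andP; split.
  - apply: (eq_integrable _ _ _ _ iL) => // t ht /=; by rewrite (eL t (set_mem ht)).
  - apply: (eq_integrable _ _ _ _ iR) => // t ht /=; by rewrite (eR t (set_mem ht)).
under eq_Rintegral do rewrite -mulrA.
rewrite (@three (fun t => t * (laplace_pdf th0 s0 t * laplace_pdf 0 se (x - t))) _ _ thx cg0).
- rewrite (eq_Rintegral mu (D := `]-oo, th0]) (g := pfL (C * th0) (- C) (- (b * d)) (a + b) th0)); last first.
    by move=> t ht; exact: (nL t (set_mem ht)).
  rewrite (eq_Rintegral mu (D := `[th0, x]) (g := pf (C * th0) C (- (b * d)) (b - a) th0)); last first.
    by move=> t ht; exact: (nM t (set_mem ht)).
  rewrite (eq_Rintegral mu (D := `[x, +oo[) (g := pf (C * x) C (- (a * d)) (- (a + b)) x)); last first.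
    by move=> t ht; exact: (nR t (set_mem ht)).
  rewrite vL' vR' vM'.
  rewrite /Fp ed subrr mulr0 addr0 /Df /Mf /d; field.
  by apply/andP; split.
- apply: (eq_integrable _ _ _ _ iL') => // t ht /=; by rewrite (nL t (set_mem ht)).
- apply: (eq_integrable _ _ _ _ iR') => // t ht /=; by rewrite (nR t (set_mem ht)).
Qed.

Lemma int_minus (s0 se th0 x : R) : 0 < s0 -> 0 < se -> s0 != se -> x < th0 ->
  \int[mu]_(t in setT) (laplace_pdf th0 s0 t * laplace_pdf 0 se (x - t)) =
    (2 * s0)^-1 * (2 * se)^-1 * Df s0^-1 se^-1 (th0 - x) /\
  \int[mu]_(t in setT) (t * laplace_pdf th0 s0 t * laplace_pdf 0 se (x - t)) =
    (2 * s0)^-1 * (2 * se)^-1 * (th0 * Df s0^-1 se^-1 (th0 - x) - Mf s0^-1 se^-1 (th0 - x)).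
Proof.
move=> s00 se0 sne thx.
have s0n : s0 != 0 by rewrite gt_eqF.
have sen : se != 0 by rewrite gt_eqF.
set a := s0^-1. set b := se^-1. set d := th0 - x. set C := (2 * s0)^-1 * (2 * se)^-1.
have a0 : 0 < a by rewrite invr_gt0.
have b0 : 0 < b by rewrite invr_gt0.
have k0 : 0 < a + b by rewrite addr_gt0.
have kn : a + b != 0 by rewrite gt_eqF.
have cn : b - a != 0.
  rewrite subr_eq0; apply/eqP => /(congr1 (fun z => z^-1)); rewrite !invrK => h.
  by move/eqP: sne; rewrite h.
have cf : continuous (fun t => laplace_pdf th0 s0 t * laplace_pdf 0 se (x - t)).
  move=> t; apply: continuousM.
    by apply: (cont_lap (fun y => y) th0 s0) => y; exact: cvg_id.
  apply: (cont_lap (fun t => x - t) 0 se) => y.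
  apply: continuousB; [exact: cst_continuous | exact: cvg_id].
have cg0 : continuous ((fun t => t) \* (fun t => laplace_pdf th0 s0 t * laplace_pdf 0 se (x - t))).
  by move=> t; apply: continuousM; [exact: cvg_id | exact: cf].
have eL : {in `]-oo, x], forall t, laplace_pdf th0 s0 t * laplace_pdf 0 se (x - t) = pfL C 0 (- (a * d)) (a + b) x t}.
  move=> t; rewrite in_itv /= => ht.
  rewrite /laplace_pdf /pfL ler0_norm ?subr_le0 ?(le_trans ht) ?ltW // subr0 ger0_norm ?subr_ge0 //.
  rewrite mul0r addr0; apply: esplit => //.
  by rewrite /d /a /b; ring.
have eM : {in `[x, th0], forall t, laplace_pdf th0 s0 t * laplace_pdf 0 se (x - t) = pf C 0 (- (a * d)) (- (b - a)) x t}.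
  move=> t; rewrite in_itv /= => /andP[h1 h2].
  rewrite /laplace_pdf /pf ler0_norm ?subr_le0 // subr0 ler0_norm ?subr_le0 //.
  rewrite mul0r addr0; apply: esplit => //.
  by rewrite /d /a /b; ring.
have eR : {in `[th0, +oo[, forall t, laplace_pdf th0 s0 t * laplace_pdf 0 se (x - t) = pf C 0 (- (b * d)) (- (a + b)) th0 t}.
  move=> t; rewrite in_itv /= andbT => ht.
  rewrite /laplace_pdf /pf ger0_norm ?subr_ge0 // subr0 ler0_norm ?subr_le0 ?(le_trans (ltW thx)) //.
  rewrite mul0r addr0; apply: esplit => //.
  by rewrite /d /a /b; ring.
have nL : {in `]-oo, x], forall t, t * (laplace_pdf th0 s0 t * laplace_pdf 0 se (x - t)) = pfL (C * x) (- C) (- (a * d)) (a + b) x t}.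
  move=> t ht; rewrite eL // /pfL; ring.
have nM : {in `[x, th0], forall t, t * (laplace_pdf th0 s0 t * laplace_pdf 0 se (x - t)) = pf (C * x) C (- (a * d)) (- (b - a)) x t}.
  move=> t ht; rewrite eM // /pf; ring.
have nR : {in `[th0, +oo[, forall t, t * (laplace_pdf th0 s0 t * laplace_pdf 0 se (x - t)) = pf (C * th0) C (- (b * d)) (- (a + b)) th0 t}.
  move=> t ht; rewrite eR // /pf; ring.
have cn' : - (b - a) != 0 by rewrite oppr_eq0.
have [iL vL] := left_piece C 0 (- (a * d)) (a + b) x k0.
have [iR vR] := right_piece C 0 (- (b * d)) (a + b) th0 k0.
have [iL' vL'] := left_piece (C * x) (- C) (- (a * d)) (a + b) x k0.
have [iR' vR'] := right_piece (C * th0) C (- (b * d)) (a + b) th0 k0.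
have [_ vM] := mid_piece C 0 (- (a * d)) (- (b - a)) x th0 cn' thx.
have [_ vM'] := mid_piece (C * x) C (- (a * d)) (- (b - a)) x th0 cn' thx.
have ed : - (a * d) + - (b - a) * (th0 - x) = - (b * d) by rewrite /d; ring.
split.
  rewrite (three _ _ _ thx cf).
  - rewrite (eq_Rintegral mu (D := `]-oo, x]) (g := pfL C 0 (- (a * d)) (a + b) x)); last first.
      by move=> t ht; exact: (eL t (set_mem ht)).
    rewrite (eq_Rintegral mu (D := `[x, th0]) (g := pf C 0 (- (a * d)) (- (b - a)) x)); last first.
      by move=> t ht; exact: (eM t (set_mem ht)).
    rewrite (eq_Rintegral mu (D := `[th0, +oo[) (g := pf C 0 (- (b * d)) (- (a + b)) th0)); last first.
      by move=> t ht; exact: (eR t (set_mem ht)).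
    rewrite vL vR vM.
    rewrite /Fp ed subrr mulr0 addr0 /Df; field.
    by apply/andP; split.
  - apply: (eq_integrable _ _ _ _ iL) => // t ht /=; by rewrite (eL t (set_mem ht)).
  - apply: (eq_integrable _ _ _ _ iR) => // t ht /=; by rewrite (eR t (set_mem ht)).
under eq_Rintegral do rewrite -mulrA.
rewrite (@three (fun t => t * (laplace_pdf th0 s0 t * laplace_pdf 0 se (x - t))) _ _ thx cg0).
- rewrite (eq_Rintegral mu (D := `]-oo, x]) (g := pfL (C * x) (- C) (- (a * d)) (a + b) x)); last first.
    by move=> t ht; exact: (nL t (set_mem ht)).
  rewrite (eq_Rintegral mu (D := `[x, th0]) (g := pf (C * x) C (- (a * d)) (- (b - a)) x)); last first.
    by move=> t ht; exact: (nM t (set_mem ht)).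
  rewrite (eq_Rintegral mu (D := `[th0, +oo[) (g := pf (C * th0) C (- (b * d)) (- (a + b)) th0)); last first.
    by move=> t ht; exact: (nR t (set_mem ht)).
  rewrite vL' vR' vM'.
  rewrite /Fp ed subrr mulr0 addr0 /Df /Mf /d; field.
  by apply/andP; split.
- apply: (eq_integrable _ _ _ _ iL') => // t ht /=; by rewrite (nL t (set_mem ht)).
- apply: (eq_integrable _ _ _ _ iR') => // t ht /=; by rewrite (nR t (set_mem ht)).
Qed.


Lemma lim_ratio (r q : R -> R) A0 A1 A2 B0 B1 : B0 != 0 ->
  r x @[x --> +oo] --> 0 -> q x @[x --> +oo] --> 0 ->
  (fun x => (A0 + A1 * r x + A2 * q x) / (B0 + B1 * r x)) @ +oo --> A0 / B0.
Proof.
move=> B0n hr hq.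
have N : (fun x => A0 + A1 * r x + A2 * q x) @ +oo --> A0 + A1 * 0 + A2 * 0.
  apply: cvgD; [apply: cvgD; [exact: cvg_cst | exact: cvgMl_tmp] | exact: cvgMl_tmp].
have D : (fun x => B0 + B1 * r x) @ +oo --> B0 + B1 * 0.
  apply: cvgD; [exact: cvg_cst | exact: cvgMl_tmp].
rewrite !mulr0 !addr0 in N D.
apply: cvgM => //.
exact: cvgV.
Qed.

Lemma Df_gt0 a b d : 0 < a -> 0 < b -> a != b -> 0 < d -> 0 < Df a b d.
Proof.
move=> a0 b0 ab d0.
rewrite /Df.
have k0 : 0 < a + b by rewrite addr_gt0.
have h : 0 <= (expR (- (a * d)) - expR (- (b * d))) / (b - a).
  case: (ltgtP a b) => [lab|lba|eab]; last by move/eqP: ab; rewrite eab.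
  - have hh : - (b * d) <= - (a * d) by rewrite lerN2 ler_pM2r // ltW.
    apply: divr_ge0; first by rewrite subr_ge0 ler_expR.
    by rewrite subr_ge0 ltW.
  - have hh : - (a * d) <= - (b * d) by rewrite lerN2 ler_pM2r // ltW.
    rewrite -mulrNN -invrN !opprB.
    apply: divr_ge0; first by rewrite subr_ge0 ler_expR.
    by rewrite subr_ge0 ltW.
have e1 := expR_gt0 (- (b * d)).
have e2 := expR_gt0 (- (a * d)).
have h1 : 0 < expR (- (b * d)) / (a + b) by rewrite divr_gt0.
have h2 : 0 < expR (- (a * d)) / (a + b) by rewrite divr_gt0.
lra.
Qed.

Lemma lim1 a b p : 0 < a -> a < b ->
  (fun x => Mf a b (x - p) / Df a b (x - p) - (x - p)) @ +oo -->
  ((a + b)^-2 - (b - a)^-2) / ((a + b)^-1 + (b - a)^-1).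
Proof.
move=> a0 ab.
have b0 : 0 < b by apply: lt_trans ab.
have k0 : 0 < a + b by rewrite addr_gt0.
have kn : a + b != 0 by rewrite gt_eqF.
have c0 : 0 < b - a by rewrite subr_gt0.
have cn : b - a != 0 by rewrite gt_eqF.
have sn : - (b - a) < 0 by rewrite oppr_lt0.
have anb : a != b by rewrite lt_eqF.
apply: (@cvg_trans _ ((fun x => (((a + b)^-2 - (b - a)^-2) +
      ((b - a)^-2 - (a + b)^-2) * expR (- (b - a) * (x - p)) +
      ((b - a)^-1 - (a + b)^-1) * ((x - p) * expR (- (b - a) * (x - p)))) /
      (((a + b)^-1 + (b - a)^-1) + ((a + b)^-1 - (b - a)^-1) * expR (- (b - a) * (x - p)))) @ +oo)).
  apply: near_eq_cvg; near=> x.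
  have xp : 0 < x - p.
    rewrite subr_gt0; near: x; apply: nbhs_pinfty_gt; exact: num_real.
  have Dp := @Df_gt0 a b (x - p) a0 b0 anb xp.
  set d := x - p in xp Dp *.
  set r := expR (- (b - a) * d).
  set u := expR (- (a * d)).
  have hw : expR (- (b * d)) = r * u by rewrite /r /u -expRD; congr expR; ring.
  have u0 : u != 0 by rewrite gt_eqF // expR_gt0.
  move: Dp; rewrite /Mf /Df hw -/u => Dp.
  have Dn : r * u / (a + b) + (u - r * u) / (b - a) + u / (a + b) != 0 by rewrite gt_eqF.
  have Hn : (a + b)^-1 + (b - a)^-1 + ((a + b)^-1 - (b - a)^-1) * r != 0.
    apply: contraNneq Dn => H0.
    rewrite (_ : r * u / (a + b) + (u - r * u) / (b - a) + u / (a + b) =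
      u * ((a + b)^-1 + (b - a)^-1 + ((a + b)^-1 - (b - a)^-1) * r)).
      by rewrite H0 mulr0.
    by field; apply/andP; split.
  rewrite /=; field.
  have E3 : r * u * (b - a) + (u - r * u) * (a + b) + u * (b - a) =
    (a + b) * (b - a) * (r * u / (a + b) + (u - r * u) / (b - a) + u / (a + b)).
    by field; apply/andP; split.
  have E4 : b - a + (a + b) + (b - a + -1 * (a + b)) * r =
    (a + b) * (b - a) * ((a + b)^-1 + (b - a)^-1 + ((a + b)^-1 - (b - a)^-1) * r).
    by field; apply/andP; split.
  by rewrite kn cn E3 E4 !mulf_neq0.
apply: lim_ratio.
- by rewrite gt_eqF // addr_gt0 // invr_gt0.
- exact: decay0.
- exact: decay1.
Unshelve. all: end_near.
Qed.


Lemma lim2 a b p : 0 < b -> b < a ->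
  (fun x => Mf a b (x - p) / Df a b (x - p)) @ +oo -->
  ((b - a)^-2 - (a + b)^-2) / ((a + b)^-1 - (b - a)^-1).
Proof.
move=> b0 ba.
have a0 : 0 < a by apply: lt_trans ba.
have k0 : 0 < a + b by rewrite addr_gt0.
have kn : a + b != 0 by rewrite gt_eqF.
have c0 : b - a < 0 by rewrite subr_lt0.
have cn : b - a != 0 by rewrite lt_eqF.
have anb : a != b by rewrite gt_eqF.
apply: (@cvg_trans _ ((fun x => (((b - a)^-2 - (a + b)^-2) +
      ((a + b)^-2 - (b - a)^-2) * expR ((b - a) * (x - p)) +
      ((b - a)^-1 + (a + b)^-1) * ((x - p) * expR ((b - a) * (x - p)))) /
      (((a + b)^-1 - (b - a)^-1) + ((b - a)^-1 + (a + b)^-1) * expR ((b - a) * (x - p)))) @ +oo)).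
  apply: near_eq_cvg; near=> x.
  have xp : 0 < x - p.
    rewrite subr_gt0; near: x; apply: nbhs_pinfty_gt; exact: num_real.
  have Dp := @Df_gt0 a b (x - p) a0 b0 anb xp.
  set d := x - p in xp Dp *.
  set r := expR ((b - a) * d).
  set w := expR (- (b * d)).
  have hu : expR (- (a * d)) = r * w by rewrite /r /w -expRD; congr expR; ring.
  have w0 : w != 0 by rewrite gt_eqF // expR_gt0.
  move: Dp; rewrite /Mf /Df hu -/w => Dp.
  have Dn : w / (a + b) + (r * w - w) / (b - a) + r * w / (a + b) != 0 by rewrite gt_eqF.
  rewrite /=; field.
  have E3 : w * (b - a) + (r * w - w) * (a + b) + r * w * (b - a) =
    (a + b) * (b - a) * (w / (a + b) + (r * w - w) / (b - a) + r * w / (a + b)).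
    by field; apply/andP; split.
  have Hn : (a + b)^-1 - (b - a)^-1 + ((b - a)^-1 + (a + b)^-1) * r != 0.
    apply: contraNneq Dn => H0.
    rewrite (_ : w / (a + b) + (r * w - w) / (b - a) + r * w / (a + b) =
      w * ((a + b)^-1 - (b - a)^-1 + ((b - a)^-1 + (a + b)^-1) * r)).
      by rewrite H0 mulr0.
    by field; apply/andP; split.
  have E4 : b - a + -1 * (a + b) + (a + b + (b - a)) * r =
    (a + b) * (b - a) * ((a + b)^-1 - (b - a)^-1 + ((b - a)^-1 + (a + b)^-1) * r).
    by field; apply/andP; split.
  by rewrite kn cn E3 E4 !mulf_neq0.
apply: lim_ratio.
- have h1 : (b - a)^-1 < 0 by rewrite invr_lt0.
  have h2 : 0 < (a + b)^-1 by rewrite invr_gt0.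
  rewrite gt_eqF //; lra.
- exact: decay0.
- exact: decay1.
Unshelve. all: end_near.
Qed.

End S.

Section M.
Context {R : realType}.

Lemma inv_neq (s0 se : R) : 0 < s0 -> 0 < se -> s0 != se -> s0^-1 != se^-1.
Proof.
move=> s00 se0 sne; apply/eqP => /(congr1 (fun z => z^-1)); rewrite !invrK => h.
by move/eqP: sne; rewrite h.
Qed.

Lemma pm_plus (s0 se th0 x : R) : 0 < s0 -> 0 < se -> s0 != se -> th0 < x ->
  posterior_mean th0 s0 se x =
  th0 + Mf s0^-1 se^-1 (x - th0) / Df s0^-1 se^-1 (x - th0).
Proof.
move=> s00 se0 sne thx.
have [h1 h2] := int_plus s0 se th0 x s00 se0 sne thx.
rewrite /posterior_mean h1 h2.
have xp : 0 < x - th0 by rewrite subr_gt0.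
have a0 : 0 < s0^-1 by rewrite invr_gt0.
have b0 : 0 < se^-1 by rewrite invr_gt0.
have Dp := @Df_gt0 R s0^-1 se^-1 (x - th0) a0 b0 (@inv_neq s0 se s00 se0 sne) xp.
have s0n : s0 != 0 by rewrite gt_eqF.
have sen : se != 0 by rewrite gt_eqF.
field.
by rewrite s0n sen gt_eqF.
Qed.

Lemma pm_minus (s0 se th0 x : R) : 0 < s0 -> 0 < se -> s0 != se -> x < th0 ->
  posterior_mean th0 s0 se x =
  th0 - Mf s0^-1 se^-1 (th0 - x) / Df s0^-1 se^-1 (th0 - x).
Proof.
move=> s00 se0 sne thx.
have [h1 h2] := int_minus s0 se th0 x s00 se0 sne thx.
rewrite /posterior_mean h1 h2.
have xp : 0 < th0 - x by rewrite subr_gt0.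
have a0 : 0 < s0^-1 by rewrite invr_gt0.
have b0 : 0 < se^-1 by rewrite invr_gt0.
have Dp := @Df_gt0 R s0^-1 se^-1 (th0 - x) a0 b0 (@inv_neq s0 se s00 se0 sne) xp.
have s0n : s0 != 0 by rewrite gt_eqF.
have sen : se != 0 by rewrite gt_eqF.
field.
by rewrite s0n sen gt_eqF.
Qed.

End M.

Theorem mainTheorem13 (R : realType) (s0 se th0 : R) :
  0 < s0 -> 0 < se -> s0 != se ->
  (s0 > se ->
     (fun x => posterior_mean th0 s0 se x
                 - (x - Num.sg (x - th0) * xstar s0 se)) @ +oo --> 0
  /\ (fun x => posterior_mean th0 s0 se x
                 - (x - Num.sg (x - th0) * xstar s0 se)) @ -oo --> 0) /\
  (s0 < se ->
     (fun x => posterior_mean th0 s0 se x - th0) @ +oo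
        --> - (s0 / se) * xstar s0 se
  /\ (fun x => posterior_mean th0 s0 se x - th0) @ -oo
        --> (s0 / se) * xstar s0 se).
Proof.
move=> s00 se0 sne.
have s0n : s0 != 0 by rewrite gt_eqF.
have sen : se != 0 by rewrite gt_eqF.
have a0 : 0 < s0^-1 by rewrite invr_gt0.
have b0 : 0 < se^-1 by rewrite invr_gt0.
have cne : s0 - se != 0 by rewrite subr_eq0.
have spn : se + s0 != 0 by rewrite gt_eqF // addr_gt0.
have spn' : s0 + se != 0 by rewrite gt_eqF // addr_gt0.
have h1 : s0 ^+ 2 + -1 * se ^+ 2 = (s0 - se) * (s0 + se) by ring.
have h2 : s0 + -1 * se = s0 - se by ring.
have h3 : s0 * se * (s0 + -1 * se) + se * s0 * (se + s0) = 2 * s0 * s0 * se by ring.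
have h4 : s0 * se * (s0 + -1 * se) + - (se * s0) * (se + s0) = - (2 * s0 * se * se) by ring.
have n2 : (2 : R) != 0 by rewrite pnatr_eq0.
split.
  move=> ses0.
  have ab : s0^-1 < se^-1 by rewrite ltf_pV2 // posrE.
  have L := lim1 s0^-1 se^-1 th0 a0 ab.
  have L' := lim1 s0^-1 se^-1 (- th0) a0 ab.
  have E : ((s0^-1 + se^-1)^-2 - (se^-1 - s0^-1)^-2) / ((s0^-1 + se^-1)^-1 + (se^-1 - s0^-1)^-1)
      + xstar s0 se = 0.
    rewrite /xstar; field.
    by rewrite h1 h3 h2 !mulf_eq0 !negb_or s0n sen spn spn' cne n2.
  split.
    apply: (@cvg_trans _ ((fun x => Mf s0^-1 se^-1 (x - th0) / Df s0^-1 se^-1 (x - th0)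
        - (x - th0) + xstar s0 se) @ +oo)).
      apply: near_eq_cvg; near=> x.
      have xp : th0 < x by near: x; apply: nbhs_pinfty_gt; exact: num_real.
      rewrite /= pm_plus // gtr0_sg ?subr_gt0 //; ring.
    have H := cvgD L (cvg_cst (xstar s0 se)).
    rewrite E in H; exact: H.
  apply/cvgNy_compNP.
  apply: (@cvg_trans _ ((fun x => - (Mf s0^-1 se^-1 (x - - th0) / Df s0^-1 se^-1 (x - - th0)
        - (x - - th0) + xstar s0 se)) @ +oo)).
    apply: near_eq_cvg; near=> x.
    have xp : - th0 < x by near: x; apply: nbhs_pinfty_gt; exact: num_real.
    have xp' : - x < th0 by rewrite ltrNl.
    rewrite /= pm_minus // ltr0_sg ?subr_lt0 // (_ : th0 - - x = x - - th0); last by ring.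
    ring.
  have H := cvgN (cvgD L' (cvg_cst (xstar s0 se))).
  rewrite E oppr0 in H; exact: H.
move=> s0se.
have ba : se^-1 < s0^-1 by rewrite ltf_pV2 // posrE.
have L := lim2 s0^-1 se^-1 th0 b0 ba.
have L' := lim2 s0^-1 se^-1 (- th0) b0 ba.
have E : ((se^-1 - s0^-1)^-2 - (s0^-1 + se^-1)^-2) / ((s0^-1 + se^-1)^-1 - (se^-1 - s0^-1)^-1)
    = - (s0 / se) * xstar s0 se.
  rewrite /xstar; field.
  by rewrite h1 h4 h2 oppr_eq0 !mulf_eq0 !negb_or s0n sen spn spn' cne n2.
split.
  apply: (@cvg_trans _ ((fun x => Mf s0^-1 se^-1 (x - th0) / Df s0^-1 se^-1 (x - th0)) @ +oo)).
    apply: near_eq_cvg; near=> x.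
    have xp : th0 < x by near: x; apply: nbhs_pinfty_gt; exact: num_real.
    rewrite /= pm_plus //; ring.
  by rewrite -E.
apply/cvgNy_compNP.
apply: (@cvg_trans _ ((fun x => - (Mf s0^-1 se^-1 (x - - th0) / Df s0^-1 se^-1 (x - - th0))) @ +oo)).
  apply: near_eq_cvg; near=> x.
  have xp : - th0 < x by near: x; apply: nbhs_pinfty_gt; exact: num_real.
  have xp' : - x < th0 by rewrite ltrNl.
  rewrite /= pm_minus // (_ : th0 - - x = x - - th0); last by ring.
  ring.
have -> : s0 / se * xstar s0 se = - (- (s0 / se) * xstar s0 se) by rewrite mulNr opprK.
rewrite -E; exact: (cvgN L').
Unshelve. all: end_near.
Qed.
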